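(* Let $k_0,k_1,k_{-1},k_2,e_T$ be positive real numbers and consider the system \[ \dot s = k_0-k_1(e_T-c)s+k_{-1}c,\qquad \dot c = k_1(e_T-c)s-(k_{-1}+k_2)c . \] Let $W_1:=\{(s,c): s\ge 0,\ \max\{0,\frac{k_1e_Ts-k_0}{k_1s+k_{-1}}\}\le c\le \frac{k_1e_Ts}{k_1s+k_{-1}+k_2}\}$, let $w(s):=\frac{k_1e_Ts}{k_1s+k_{-1}+k_2}$, and set \[ \varepsilon_c:=\frac{k_1e_T}{k_{-1}+k_2},\qquad \tau_0:=k_{-1}+k_2,\qquad \varepsilon^*:=\frac{k_0k_1e_T}{(k_{-1}+k_2)^2}. \] Let $(s(t),c(t))$ be a solution with initial value in $W_1$, let $L(t):=|c(t)-w(s(t))|$, and let $v:=\sup_{t\ge0}|\dot s(t)|$ along this solution. Then for all $t\ge 0$, with $\tau:=\tau_0 t=(k_{-1}+k_2)t$, \[ L(t)^2\le L(0)^2e^{-\tau}+\frac{(\varepsilon_c v)^2}{\tau_0^2}\left(1-e^{-\tau}\right) \quad\text{and}\quad L(t)^2\le L(0)^2e^{-\tau}+\frac{(\varepsilon_c k_0)^2}{(k_{-1}+k_2)^2}=L(0)^2e^{-\tau}+(\varepsilon^* )^2 . \] In particular the solution approaches the curve $c=w(s)$ up to an error $(\varepsilon^* )^2$ in $L^2$, at exponential rate $k_{-1}+k_2$.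
   Context: The curve $c=w(s)$ is the quasi-steady-state (QSS) variety, i.e. the $c$-nullcline of the system; $W_1$ is the region between the $s$-nullcline (or the $s$-axis) and the $c$-nullcline. *)

(* Defs.v *)
From Stdlib Require Import Reals.
From Coquelicot Require Import Coquelicot.
Open Scope R_scope.

Definition fs (k0 k1 km1 eT s c : R) : R := k0 - k1 * (eT - c) * s + km1 * c.
Definition fc (k1 km1 k2 eT s c : R) : R := k1 * (eT - c) * s - (km1 + k2) * c.

Definition w (k1 km1 k2 eT s : R) : R := k1 * eT * s / (k1 * s + km1 + k2).

Definition W1 (k0 k1 km1 k2 eT s c : R) : Prop :=
  0 <= s /\
  Rmax 0 ((k1 * eT * s - k0) / (k1 * s + km1)) <= c /\
  c <= w k1 km1 k2 eT s.

Definition eps_c (k1 km1 k2 eT : R) : R := k1 * eT / (km1 + k2).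
Definition tau0 (km1 k2 : R) : R := km1 + k2.
Definition eps_star (k0 k1 km1 k2 eT : R) : R := k0 * k1 * eT / (km1 + k2) ^ 2.

(* Main.v *)
Require Import Defs.
From Stdlib Require Import Reals Lra Psatz.
From Coquelicot Require Import Coquelicot.
Open Scope R_scope.


Lemma der_cont (f : R -> R) x l : is_derive f x l -> continuity_pt f x.
Proof.
  intro H. apply continuity_pt_filterlim. apply (ex_derive_continuous (K:=R_AbsRing) (V:=R_NormedModule)). exists l; exact H.
Qed.

Lemma decr_on (G dG : R -> R) a b :
  a <= b ->
  (forall t, a <= t <= b -> is_derive G t (dG t)) ->
  (forall t, a <= t <= b -> dG t <= 0) ->
  G b <= G a.
Proof.
  intros Hab Hd Hn.
  destruct (MVT_gen G a b dG) as [x [Hx Hm]].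
  - intros x Hx. apply Hd. unfold Rmin, Rmax in Hx; destruct Rle_dec; lra.
  - intros x Hx. apply (der_cont _ _ (dG x)). apply Hd. unfold Rmin, Rmax in Hx; destruct Rle_dec; lra.
  - assert (dG x <= 0). { apply Hn. unfold Rmin, Rmax in Hx; destruct Rle_dec; lra. }
    nra.
Qed.

Lemma bounded_on (f df : R -> R) T :
  0 <= T -> (forall t, 0 <= t <= T -> is_derive f t (df t)) ->
  exists B, forall t, 0 <= t <= T -> Rabs (f t) <= B.
Proof.
  intros HT Hd.
  destruct (continuity_ab_maj (fun t => Rabs (f t)) 0 T HT) as [m [Hm _]].
  - intros x Hx. apply continuity_pt_comp with (f2 := Rabs).
    + apply (der_cont _ _ (df x)). now apply Hd.
    + apply Rcontinuity_abs.
  - exists (Rabs (f m)). exact Hm.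
Qed.

Lemma phi_derive x : is_derive (fun y => (Rmin y 0)^2) x (2 * Rmin x 0).
Proof.
  apply is_derive_Reals. intros eps He. exists (mkposreal eps He).
  intros h Hh Hlt. simpl in Hlt.
  assert (Hb : Rabs ((Rmin (x+h) 0)^2 - (Rmin x 0)^2 - 2 * Rmin x 0 * h) <= h^2).
  { unfold Rmin; destruct (Rle_dec (x+h) 0); destruct (Rle_dec x 0);
    apply Rabs_le; split; nra. }
  replace (((Rmin (x+h) 0)^2 - (Rmin x 0)^2) / h - 2 * Rmin x 0)
    with (((Rmin (x+h) 0)^2 - (Rmin x 0)^2 - 2 * Rmin x 0 * h) / h) by (field; auto).
  unfold Rdiv. rewrite Rabs_mult, Rabs_inv.
  apply Rle_lt_trans with (h^2 * / Rabs h).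
  - apply Rmult_le_compat_r. left; apply Rinv_0_lt_compat, Rabs_pos_lt; auto. exact Hb.
  - rewrite <- pow2_abs. replace (Rabs h ^2 * / Rabs h) with (Rabs h). lra.
    field. apply Rabs_no_R0; auto.
Qed.

Lemma gronwall0 (N dN : R -> R) M T :
  0 <= T ->
  (forall t, 0 <= t <= T -> is_derive N t (dN t)) ->
  (forall t, 0 <= t <= T -> 0 <= N t) -> N 0 = 0 ->
  (forall t, 0 <= t <= T -> dN t <= M * N t) ->
  forall t, 0 <= t <= T -> N t = 0.
Proof.
  intros HT Hd Hp H0 Hb t Ht.
  assert (HG : (fun t => N t * exp (- (M * t))) t <= (fun t => N t * exp (- (M * t))) 0).
  { apply (decr_on (fun t => N t * exp (- (M * t))) (fun t => dN t * exp (-(M*t)) + N t * (exp (-(M*t)) * (-(M)))) 0 t).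
    - lra.
    - intros x Hx. apply (is_derive_mult N (fun t => exp (-(M*t)))).
      + apply Hd; lra.
      + auto_derive; auto; ring.
      + intros; apply Rmult_comm.
    - intros x Hx. assert (dN x <= M * N x) by (apply Hb; lra).
      pose proof (exp_pos (-(M*x))). nra. }
  simpl in HG. rewrite H0 in HG. assert (0 <= N t) by (apply Hp; lra).
  pose proof (exp_pos (-(M*t))). nra.
Qed.


Lemma rmin_cases x : (x <= 0 /\ Rmin x 0 = x) \/ (0 <= x /\ Rmin x 0 = 0).
Proof. unfold Rmin; destruct Rle_dec; [left|right]; lra. Qed.

Lemma Rabs_le_between x B : Rabs x <= B -> -B <= x <= B.
Proof. unfold Rabs; destruct Rcase_abs; lra. Qed.



Lemma L1 (k1 km1 k2 eT B s c p q : R) (h1 : 0 < k1) (hm : 0 < km1) (h2 : 0 < k2) (he : 0 < eT) (hs : Rabs s <= B) (hc : Rabs c <= B) (hp : Rabs p <= B) (hq : Rabs q <= B) (hqd : q = k1*(eT-c)*s - (km1+k2)*c) : - (k1*(eT-c)) * Rmin p 0 * p <= k1*(eT+B) * (Rmin p 0 ^2 + Rmin q 0 ^2 + Rmin s 0 ^2).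
Proof.
  pose proof (Rabs_le_between _ _ hc).
  assert (HP : Rmin p 0 * p = Rmin p 0 ^ 2) by (destruct (rmin_cases p) as [[? ->]|[? ->]]; ring).
  replace (- (k1*(eT-c)) * Rmin p 0 * p) with (k1*(c-eT) * Rmin p 0 ^2) by (rewrite <- HP; ring).
  assert (0 <= Rmin p 0 ^2) by nra. assert (0 <= Rmin q 0 ^2) by nra. assert (0 <= Rmin s 0 ^2) by nra.
  assert (k1*(c-eT) <= k1*(eT+B)) by nra.
  assert (0 <= k1*(eT+B)) by nra.
  nra.
Qed.

Lemma L2 (k1 km1 k2 eT B s c p q : R) (h1 : 0 < k1) (hm : 0 < km1) (h2 : 0 < k2) (he : 0 < eT) (hs : Rabs s <= B) (hc : Rabs c <= B) (hp : Rabs p <= B) (hq : Rabs q <= B) (hqd : q = k1*(eT-c)*s - (km1+k2)*c) : (k1*s+km1) * Rmin p 0 * q <= (2*k1*B + km1) * (Rmin p 0 ^2 + Rmin q 0 ^2 + Rmin s 0 ^2).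
Proof.
  pose proof (Rabs_le_between _ _ hs). pose proof (Rabs_le_between _ _ hq).
  pose proof (Rabs_le_between _ _ hp).
  assert (0 <= B) by lra.
  assert (0 <= Rmin p 0 ^2) by nra. assert (0 <= Rmin q 0 ^2) by nra. assert (0 <= Rmin s 0 ^2) by nra.
  assert (0 <= 2*k1*B + km1) by nra.
  destruct (rmin_cases p) as [[? ->]|[? ->]]; [|nra].
  destruct (rmin_cases q) as [[? ->]|[? ->]].
  - assert (Hb : Rabs (k1*s+km1) <= k1*B + km1).
    { apply Rle_trans with (Rabs (k1*s) + Rabs km1). apply Rabs_triang.
      rewrite Rabs_mult, (Rabs_right k1), (Rabs_right km1); try lra. nra. }
    assert (Hpq : p*q <= p^2 + q^2) by nra.
    pose proof (Rle_abs (k1*s+km1)).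
    assert (0 <= p*q) by nra.
    assert ((k1*s+km1)*(p*q) <= (k1*B+km1)*(p*q)) by (apply Rmult_le_compat_r; lra).
    assert ((k1*B+km1)*(p*q) <= (k1*B+km1)*(p^2+q^2)) by (apply Rmult_le_compat_l; nra).
    assert (0 <= k1*B*(p^2+q^2)) by (apply Rmult_le_pos; nra).
    assert (0 <= (2*k1*B+km1)*Rmin s 0 ^2) by (apply Rmult_le_pos; nra).
    nra.
  - assert (p*q <= 0) by nra.
    assert (km1*(p*q) <= 0) by nra.
    assert ((k1*s+km1)*p*q <= k1*s*p*q) by nra.
    destruct (rmin_cases s) as [[? ->]|[? ->]].
    + assert (s*p <= s^2 + p^2) by nra.
      assert (0 <= s*p) by nra.
      assert (k1*(s*p)*q <= k1*(s^2+p^2)*B).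
      { apply Rmult_le_compat; nra. }
      assert (0 <= k1*B*(s^2+p^2)) by (apply Rmult_le_pos; nra).
      assert (0 <= k1*B*q^2) by (apply Rmult_le_pos; nra).
      assert (0 <= km1*(p^2+s^2)) by (apply Rmult_le_pos; nra).
      assert (Hr : (2*k1*B+km1)*(p^2+0^2+s^2) - k1*(s^2+p^2)*B = k1*B*(s^2+p^2) + km1*(p^2+s^2)) by ring.
      lra.
    + assert (s*(p*q) <= 0) by nra.
      assert (k1*(s*(p*q)) <= 0) by nra.
      assert (0 <= (2*k1*B+km1)*(p^2+0^2+0^2)) by (apply Rmult_le_pos; nra).
      nra.
Qed.

Lemma L3 (k1 km1 k2 eT B s c p q : R) (h1 : 0 < k1) (hm : 0 < km1) (h2 : 0 < k2) (he : 0 < eT) (hs : Rabs s <= B) (hc : Rabs c <= B) (hp : Rabs p <= B) (hq : Rabs q <= B) (hqd : q = k1*(eT-c)*s - (km1+k2)*c) : (k1*(eT-c)) * Rmin q 0 * p <=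
   (2*k1*(eT+B) + k1*B*(1+k1*(B+eT))/(km1+k2)) * (Rmin p 0 ^2 + Rmin q 0 ^2 + Rmin s 0 ^2).
Proof.
  pose proof (Rabs_le_between _ _ hs). pose proof (Rabs_le_between _ _ hq).
  pose proof (Rabs_le_between _ _ hp). pose proof (Rabs_le_between _ _ hc).
  assert (0 <= B) by lra.
  assert (HK : 0 <= k1*B*(1+k1*(B+eT))/(km1+k2)).
  { apply Rmult_le_pos. apply Rmult_le_pos. apply Rmult_le_pos; lra.
    assert (0 <= k1*(B+eT)) by (apply Rmult_le_pos; lra). lra.
    left; apply Rinv_0_lt_compat; lra. }
  set (M3 := k1*B*(1+k1*(B+eT))/(km1+k2)) in *.
  assert (HC1 : 0 <= k1*(eT+B)) by (apply Rmult_le_pos; lra).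
  assert (0 <= Rmin p 0 ^2) by nra. assert (0 <= Rmin q 0 ^2) by nra. assert (0 <= Rmin s 0 ^2) by nra.
  assert (HZ : 0 <= Rmin p 0 ^2 + Rmin q 0 ^2 + Rmin s 0 ^2) by lra.
  destruct (rmin_cases q) as [[? Eq]|[? Eq]]; rewrite Eq in *.
  2:{ replace (k1 * (eT - c) * 0 * p) with 0 by ring. apply Rmult_le_pos; lra. }
  destruct (rmin_cases p) as [[? Ep]|[? Ep]].
  - rewrite Ep in *.
    assert (0 <= q*p) by nra.
    assert (k1*(eT-c) <= k1*(eT+B)) by nra.
    assert (k1*(eT-c)*q*p <= k1*(eT+B)*(q*p)) by (rewrite Rmult_assoc; apply Rmult_le_compat_r; lra).
    assert (k1*(eT+B)*(q*p) <= (2*k1*(eT+B)+M3) * (p^2+q^2+Rmin s 0 ^2)).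
    { apply Rmult_le_compat; try lra; nra. }
    lra.
  - rewrite Ep in *.
    destruct (Rle_dec c eT).
    + assert (q*p <= 0) by nra.
      assert (0 <= k1*(eT-c)) by (apply Rmult_le_pos; lra).
      assert (k1*(eT-c)*(q*p) <= 0) by nra.
      assert (0 <= (2*k1*(eT+B)+M3) * (0^2+q^2+Rmin s 0 ^2)) by (apply Rmult_le_pos; lra).
      nra.
    + assert (Hk : (km1+k2)*(c-eT) <= -q + k1*(B+eT)*(-Rmin s 0)).
      { assert (Kc : (km1+k2)*c = k1*s*(eT-c) - q) by (rewrite hqd; ring).
        assert ((km1+k2)*(c-eT) <= (km1+k2)*c) by nra.
        destruct (rmin_cases s) as [[? Es]|[? Es]]; rewrite Es in *.
        - assert ((-s)*(c-eT) <= (-s)*(B+eT)) by (apply Rmult_le_compat_l; lra).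
          assert (k1*((-s)*(c-eT)) <= k1*((-s)*(B+eT))) by (apply Rmult_le_compat_l; lra).
          nra.
        - assert (s*(eT-c) <= 0) by nra. nra. }
      assert (Hm : M3 * (km1+k2) = k1*B*(1+k1*(B+eT))) by (unfold M3; field; lra).
      assert (HS : 0 <= - Rmin s 0) by (destruct (rmin_cases s) as [[? ->]|[? ->]]; lra).
      set (S := Rmin s 0) in *.
      assert (k1*(eT-c)*q*p <= k1*(c-eT)*(-q)*B).
      { replace (k1*(eT-c)*q*p) with ((k1*(c-eT)*(-q))*p) by ring.
        apply Rmult_le_compat_l; try lra. apply Rmult_le_pos; [apply Rmult_le_pos|]; lra. }
      assert ((km1+k2)*(k1*(c-eT)*(-q)*B) <= k1*B*(-q)*(-q + k1*(B+eT)*(-S))).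
      { replace ((km1+k2)*(k1*(c-eT)*(-q)*B)) with ((k1*B*(-q))*((km1+k2)*(c-eT))) by ring.
        apply Rmult_le_compat_l; try lra. apply Rmult_le_pos; [apply Rmult_le_pos|]; lra. }
      assert ((-q)*(-S) <= q^2 + S^2) by nra.
      assert (k1*B*(-q)*(-q + k1*(B+eT)*(-S)) <= k1*B*(1+k1*(B+eT)) * (q^2+S^2)).
      { replace (k1*B*(-q)*(-q + k1*(B+eT)*(-S))) with (k1*B*(q^2 + k1*(B+eT)*((-q)*(-S)))) by ring.
        replace (k1*B*(1+k1*(B+eT)) * (q^2+S^2)) with (k1*B*((q^2+S^2) + k1*(B+eT)*(q^2+S^2))) by ring.
        apply Rmult_le_compat_l. apply Rmult_le_pos; lra.
        assert (0 <= k1*(B+eT)) by (apply Rmult_le_pos; lra).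
        assert (k1*(B+eT)*((-q)*(-S)) <= k1*(B+eT)*(q^2+S^2)) by (apply Rmult_le_compat_l; lra).
        nra. }
      assert ((km1+k2) * (k1*(eT-c)*q*p) <= (km1+k2) * (M3 * (q^2+S^2))).
      { replace ((km1+k2)*(M3*(q^2+S^2))) with (k1*B*(1+k1*(B+eT))*(q^2+S^2)) by (rewrite <- Hm; ring).
        apply Rle_trans with ((km1+k2)*(k1*(c-eT)*(-q)*B)); [apply Rmult_le_compat_l; lra | lra]. }
      assert (k1*(eT-c)*q*p <= M3 * (q^2+S^2)) by (apply Rmult_le_reg_l with (km1+k2); lra).
      assert (M3 * (q^2+S^2) <= (2*k1*(eT+B)+M3) * (0^2+q^2+S^2)).
      { apply Rmult_le_compat; try lra; nra. }
      lra.
Qed.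

Lemma L4 (k1 km1 k2 eT B s c p q : R) (h1 : 0 < k1) (hm : 0 < km1) (h2 : 0 < k2) (he : 0 < eT) (hs : Rabs s <= B) (hc : Rabs c <= B) (hp : Rabs p <= B) (hq : Rabs q <= B) (hqd : q = k1*(eT-c)*s - (km1+k2)*c) : - (k1*s+km1+k2) * Rmin q 0 * q <= (k1*B+km1+k2) * (Rmin p 0 ^2 + Rmin q 0 ^2 + Rmin s 0 ^2).
Proof.
  pose proof (Rabs_le_between _ _ hs).
  assert (HQ : Rmin q 0 * q = Rmin q 0 ^ 2) by (destruct (rmin_cases q) as [[? ->]|[? ->]]; ring).
  replace (- (k1*s+km1+k2) * Rmin q 0 * q) with (-(k1*s+km1+k2) * Rmin q 0 ^2) by (rewrite <- HQ; ring).
  assert (0 <= Rmin p 0 ^2) by nra. assert (0 <= Rmin q 0 ^2) by nra. assert (0 <= Rmin s 0 ^2) by nra.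
  assert (-(k1*s+km1+k2) <= k1*B+km1+k2) by nra.
  assert (0 <= k1*B+km1+k2) by nra.
  assert (-(k1*s+km1+k2) * Rmin q 0 ^2 <= (k1*B+km1+k2) * Rmin q 0 ^2) by (apply Rmult_le_compat_r; lra).
  assert ((k1*B+km1+k2) * Rmin q 0 ^2 <= (k1*B+km1+k2) * (Rmin p 0 ^2 + Rmin q 0 ^2 + Rmin s 0 ^2))
    by (apply Rmult_le_compat_l; lra).
  lra.
Qed.

Lemma L5 (k1 km1 k2 eT B s c p q : R) (h1 : 0 < k1) (hm : 0 < km1) (h2 : 0 < k2) (he : 0 < eT) (hs : Rabs s <= B) (hc : Rabs c <= B) (hp : Rabs p <= B) (hq : Rabs q <= B) (hqd : q = k1*(eT-c)*s - (km1+k2)*c) : Rmin s 0 * p <= Rmin p 0 ^2 + Rmin q 0 ^2 + Rmin s 0 ^2.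
Proof.
  
  destruct (rmin_cases p) as [[? ->]|[? ->]]; destruct (rmin_cases q) as [[? ->]|[? ->]];
  destruct (rmin_cases s) as [[? ->]|[? ->]]; nra.
Qed.

Lemma deriv_p (s c : R -> R) k0 k1 km1 eT t ds dc :
  is_derive s t ds -> is_derive c t dc ->
  is_derive (fun t => fs k0 k1 km1 eT (s t) (c t)) t
     (- k1*(eT - c t)*ds + (k1*s t + km1)*dc).
Proof.
  intros Hs Hc. unfold fs.
  assert (Ds : Derive (fun x : R => s x) t = ds) by (apply is_derive_unique; exact Hs).
  assert (Dc : Derive (fun x : R => c x) t = dc) by (apply is_derive_unique; exact Hc).
  auto_derive.
  - repeat split; first [exists ds; exact Hs | exists dc; exact Hc].
  - rewrite Ds, Dc. ring.
Qed.

Lemma deriv_q (s c : R -> R) k1 km1 k2 eT t ds dc :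
  is_derive s t ds -> is_derive c t dc ->
  is_derive (fun t => fc k1 km1 k2 eT (s t) (c t)) t
     (k1*(eT - c t)*ds - (k1*s t + km1 + k2)*dc).
Proof.
  intros Hs Hc. unfold fc.
  assert (Ds : Derive (fun x : R => s x) t = ds) by (apply is_derive_unique; exact Hs).
  assert (Dc : Derive (fun x : R => c x) t = dc) by (apply is_derive_unique; exact Hc).
  auto_derive.
  - repeat split; first [exists ds; exact Hs | exists dc; exact Hc].
  - rewrite Ds, Dc. ring.
Qed.

Lemma deriv_u (s c : R -> R) k1 km1 k2 eT t ds dc :
  0 < k1 -> 0 < km1 -> 0 < k2 -> 0 <= s t ->
  is_derive s t ds -> is_derive c t dc ->
  is_derive (fun t => c t - w k1 km1 k2 eT (s t)) t
   (dc - k1*eT*(km1+k2)/(k1*s t+km1+k2)^2 * ds).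
Proof.
  intros h1 hm h2 hs Hs Hc. unfold w.
  assert (HD : k1 * s t + km1 + k2 > 0) by nra.
  assert (Ds : Derive (fun x : R => s x) t = ds) by (apply is_derive_unique; exact Hs).
  assert (Dc : Derive (fun x : R => c x) t = dc) by (apply is_derive_unique; exact Hc).
  auto_derive.
  - repeat split; first [exists ds; exact Hs | exists dc; exact Hc | apply Rgt_not_eq; lra].
  - rewrite Ds, Dc. field. apply Rgt_not_eq; lra.
Qed.

Lemma phi_comp (f : R -> R) t d : is_derive f t d ->
  is_derive (fun t => Rmin (f t) 0 ^ 2) t (2 * Rmin (f t) 0 * d).
Proof.
  intro H.
  pose proof (is_derive_comp (fun y => Rmin y 0 ^2) f t _ _ (phi_derive (f t)) H) as H2.
  replace (2 * Rmin (f t) 0 * d) with (scal d (2 * Rmin (f t) 0)). exact H2.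
  unfold scal; simpl; unfold mult; simpl. ring.
Qed.

Lemma rmin0 x : Rmin x 0 ^ 2 = 0 -> 0 <= x.
Proof. intro H. destruct (rmin_cases x) as [[? E]|[? E]]; rewrite E in H; nra. Qed.

Lemma invariance k0 k1 km1 k2 eT (s c : R -> R) :
  0 < k0 -> 0 < k1 -> 0 < km1 -> 0 < k2 -> 0 < eT ->
  (forall t, 0 <= t -> is_derive s t (fs k0 k1 km1 eT (s t) (c t))) ->
  (forall t, 0 <= t -> is_derive c t (fc k1 km1 k2 eT (s t) (c t))) ->
  0 <= s 0 -> 0 <= fs k0 k1 km1 eT (s 0) (c 0) -> 0 <= fc k1 km1 k2 eT (s 0) (c 0) ->
  forall T, 0 <= T -> 0 <= s T /\ 0 <= fs k0 k1 km1 eT (s T) (c T)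
                      /\ 0 <= fc k1 km1 k2 eT (s T) (c T).
Proof.
  intros H0 H1 Hm H2 He Hs Hc S0 P0 Q0 T HT.
  set (p := fun t => fs k0 k1 km1 eT (s t) (c t)).
  set (q := fun t => fc k1 km1 k2 eT (s t) (c t)).
  set (dp := fun t => - k1*(eT - c t)*p t + (k1*s t + km1)*q t).
  set (dq := fun t => k1*(eT - c t)*p t - (k1 * s t + km1 + k2)*q t).
  assert (Dp : forall t, 0 <= t -> is_derive p t (dp t)).
  { intros t Ht. apply (deriv_p s c k0 k1 km1 eT t (p t) (q t)); [apply Hs|apply Hc]; lra. }
  assert (Dq : forall t, 0 <= t -> is_derive q t (dq t)).
  { intros t Ht. apply (deriv_q s c k1 km1 k2 eT t (p t) (q t)); [apply Hs|apply Hc]; lra. }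
  destruct (bounded_on s p T HT) as [Bs HBs]. { intros; apply Hs; lra. }
  destruct (bounded_on c q T HT) as [Bc HBc]. { intros; apply Hc; lra. }
  destruct (bounded_on p dp T HT) as [Bp HBp]. { intros; apply Dp; lra. }
  destruct (bounded_on q dq T HT) as [Bq HBq]. { intros; apply Dq; lra. }
  assert (T0 : 0 <= 0 <= T) by lra.
  pose proof (HBs 0 T0). pose proof (HBc 0 T0). pose proof (HBp 0 T0). pose proof (HBq 0 T0).
  pose proof (Rabs_pos (s 0)). pose proof (Rabs_pos (c 0)).
  pose proof (Rabs_pos (p 0)). pose proof (Rabs_pos (q 0)).
  set (B := Bs+Bc+Bp+Bq).
  set (N := fun t => Rmin (p t) 0 ^2 + Rmin (q t) 0 ^2 + Rmin (s t) 0 ^2).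
  set (dN := fun t => 2*Rmin (p t) 0 * dp t + 2*Rmin (q t) 0 * dq t + 2*Rmin (s t) 0 * p t).
  set (M3 := k1*B*(1+k1*(B+eT))/(km1+k2)).
  set (M := 2*(k1*(eT+B) + (2*k1*B+km1) + (2*k1*(eT+B) + M3) + (k1*B+km1+k2) + 1)).
  assert (HN : forall t, 0 <= t <= T -> N t = 0).
  { apply (gronwall0 N dN M T HT).
    - intros t Ht. unfold N, dN.
      assert (t0 : 0 <= t) by lra.
      pose proof (phi_comp p t _ (Dp t t0)) as a.
      pose proof (phi_comp q t _ (Dq t t0)) as b.
      pose proof (phi_comp s t _ (Hs t t0)) as c'.
      pose proof (is_derive_plus _ _ t _ _ a b) as ab.
      pose proof (is_derive_plus _ _ t _ _ ab c') as abc.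
      exact abc.
    - intros t Ht; unfold N.
      pose proof (pow2_ge_0 (Rmin (p t) 0)). pose proof (pow2_ge_0 (Rmin (q t) 0)).
      pose proof (pow2_ge_0 (Rmin (s t) 0)). lra.
    - unfold N. rewrite (Rmin_right (p 0) 0 P0), (Rmin_right (q 0) 0 Q0), (Rmin_right (s 0) 0 S0).
      ring.
    - intros t Ht.
      assert (hs : Rabs (s t) <= B) by (pose proof (HBs t Ht); unfold B; lra).
      assert (hc : Rabs (c t) <= B) by (pose proof (HBc t Ht); unfold B; lra).
      assert (hp : Rabs (p t) <= B) by (pose proof (HBp t Ht); unfold B; lra).
      assert (hq : Rabs (q t) <= B) by (pose proof (HBq t Ht); unfold B; lra).
      assert (hqd : q t = k1*(eT-c t)*s t - (km1+k2)*c t) by reflexivity.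
      pose proof (L1 k1 km1 k2 eT B (s t) (c t) (p t) (q t) H1 Hm H2 He hs hc hp hq hqd) as l1.
      pose proof (L2 k1 km1 k2 eT B (s t) (c t) (p t) (q t) H1 Hm H2 He hs hc hp hq hqd) as l2.
      pose proof (L3 k1 km1 k2 eT B (s t) (c t) (p t) (q t) H1 Hm H2 He hs hc hp hq hqd) as l3.
      pose proof (L4 k1 km1 k2 eT B (s t) (c t) (p t) (q t) H1 Hm H2 He hs hc hp hq hqd) as l4.
      pose proof (L5 k1 km1 k2 eT B (s t) (c t) (p t) (q t) H1 Hm H2 He hs hc hp hq hqd) as l5.
      fold M3 in l3.
      set (Z := Rmin (p t) 0 ^ 2 + Rmin (q t) 0 ^ 2 + Rmin (s t) 0 ^ 2) in *.
      assert (E1 : dN t = 2*(- (k1*(eT-c t)) * Rmin (p t) 0 * p t + (k1*s t+km1) * Rmin (p t) 0 * q t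
          + (k1*(eT-c t)) * Rmin (q t) 0 * p t + - (k1*s t+km1+k2) * Rmin (q t) 0 * q t
          + Rmin (s t) 0 * p t)) by (unfold dN, dp, dq; ring).
      assert (E2 : M * N t = 2*(k1*(eT+B) * Z + (2*k1*B+km1) * Z + (2*k1*(eT+B) + M3) * Z
          + (k1*B+km1+k2) * Z + Z)) by (unfold M, N, Z; ring).
      rewrite E1, E2. lra. }
  assert (HT' : 0 <= T <= T) by lra.
  pose proof (HN T HT') as HNT. unfold N in HNT.
  pose proof (pow2_ge_0 (Rmin (p T) 0)). pose proof (pow2_ge_0 (Rmin (q T) 0)).
  pose proof (pow2_ge_0 (Rmin (s T) 0)).
  split; [|split]; apply rmin0;
    [ | change (fs k0 k1 km1 eT (s T) (c T)) with (p T)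
      | change (fc k1 km1 k2 eT (s T) (c T)) with (q T)]; lra.
Qed.

Lemma key2 u D W p A tau : 0 < tau -> tau <= D -> Rabs (W*p) <= A ->
  2*u*(-D*u - W*p) + (u^2 - A^2/tau^2)*tau <= 0.
Proof.
  intros Ht HD HA.
  assert (H1 : -(u*(W*p)) <= Rabs u * A).
  { apply Rle_trans with (Rabs (u*(W*p))).
    - rewrite <- Rabs_Ropp. apply Rle_abs.
    - rewrite Rabs_mult. apply Rmult_le_compat_l; [apply Rabs_pos|exact HA]. }
  assert (H2 : (u^2 - A^2/tau^2)*tau = tau*u^2 - A^2/tau) by (field; lra).
  assert (H3 : 0 <= (tau*Rabs u - A)^2 / tau).
  { apply Rmult_le_pos. apply pow2_ge_0. left; apply Rinv_0_lt_compat; lra. }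
  assert (H4 : (tau*Rabs u - A)^2 / tau = tau*u^2 - 2*Rabs u*A + A^2/tau).
  { rewrite <- (pow2_abs u). field. lra. }
  assert (H5 : tau*u^2 <= D*u^2) by (apply Rmult_le_compat_r; [apply pow2_ge_0|lra]).
  rewrite H2.
  replace (2*u*(-D*u - W*p)) with (-2*(D*u^2) + 2*(-(u*(W*p)))) by ring.
  lra.
Qed.

Lemma W_le k1 km1 k2 eT x : 0 < k1 -> 0 < km1 -> 0 < k2 -> 0 < eT -> 0 <= x ->
  0 <= k1*eT*(km1+k2)/(k1*x+km1+k2)^2 <= k1*eT/(km1+k2).
Proof.
  intros h1 hm h2 he hx.
  assert (HD : km1+k2 <= k1*x+km1+k2) by nra.
  assert (HK2 : 0 < (km1+k2)^2) by nra.
  assert (HD2 : (km1+k2)^2 <= (k1*x+km1+k2)^2) by (apply pow_incr; lra).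
  assert (HP : 0 <= k1*eT*(km1+k2)) by (apply Rmult_le_pos; [apply Rmult_le_pos|]; lra).
  split.
  - apply Rmult_le_pos; [exact HP|]. left; apply Rinv_0_lt_compat; lra.
  - apply Rle_trans with (k1*eT*(km1+k2)/(km1+k2)^2).
    + unfold Rdiv. apply Rmult_le_compat_l; [exact HP|]. apply Rinv_le_contravar; lra.
    + right. field. lra.
Qed.

Lemma main_bound k0 k1 km1 k2 eT (s c : R -> R) A :
  0 < k0 -> 0 < k1 -> 0 < km1 -> 0 < k2 -> 0 < eT ->
  (forall t, 0 <= t -> is_derive s t (fs k0 k1 km1 eT (s t) (c t))) ->
  (forall t, 0 <= t -> is_derive c t (fc k1 km1 k2 eT (s t) (c t))) ->
  (forall t, 0 <= t -> 0 <= s t) ->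
  (forall t, 0 <= t ->
     Rabs (k1*eT*(km1+k2)/(k1*s t+km1+k2)^2 * fs k0 k1 km1 eT (s t) (c t)) <= A) ->
  forall t, 0 <= t ->
   (c t - w k1 km1 k2 eT (s t))^2 <=
     (c 0 - w k1 km1 k2 eT (s 0))^2 * exp (-((km1+k2)*t))
     + A^2/(km1+k2)^2 * (1 - exp (-((km1+k2)*t))).
Proof.
  intros H0 H1 Hm H2 He Hs Hc Spos HA t Ht.
  set (tau := km1+k2).
  set (u := fun x => c x - w k1 km1 k2 eT (s x)).
  set (W := fun x => k1*eT*(km1+k2)/(k1*s x+km1+k2)^2).
  set (D := fun x => k1*s x + km1 + k2).
  set (p := fun x => fs k0 k1 km1 eT (s x) (c x)).
  assert (Du : forall x, 0 <= x -> is_derive u x (-(D x) * u x - W x * p x)).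
  { intros x Hx.
    assert (E : -(D x) * u x - W x * p x = fc k1 km1 k2 eT (s x) (c x) - W x * p x).
    { unfold D, u, fc, w. field. pose proof (Spos x Hx). nra. }
    rewrite E. unfold u, W.
    apply (deriv_u s c k1 km1 k2 eT x); auto. }
  set (K := A^2/tau^2).
  assert (HG : (fun x => (u x ^2 - K) * exp (tau*x)) t <= (fun x => (u x ^2 - K) * exp (tau*x)) 0).
  { apply (decr_on (fun x => (u x ^2 - K) * exp (tau*x)) (fun x => (2 * u x * (-(D x) * u x - W x * p x)) * exp (tau*x)
                               + (u x ^2 - K) * (exp (tau*x) * tau)) 0 t).
    - lra.
    - intros x Hx.
      assert (Dx : Derive (fun y : R => u y) x = -(D x) * u x - W x * p x)
        by (apply is_derive_unique; apply Du; lra).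
      auto_derive.
      + exists (-(D x) * u x - W x * p x); apply Du; lra.
      + rewrite Dx. ring.
    - intros x Hx.
      assert (k : 2*u x*(-(D x)*u x - W x*p x) + (u x^2 - K)*tau <= 0).
      { apply key2. unfold tau; lra. unfold D, tau. pose proof (Spos x (proj1 Hx)). nra.
        apply HA; lra. }
      pose proof (exp_pos (tau*x)). 
      replace ((2 * u x * (-(D x) * u x - W x * p x)) * exp (tau*x) + (u x ^2 - K) * (exp (tau*x) * tau))
        with (exp (tau*x) * (2*u x*(-(D x)*u x - W x*p x) + (u x^2 - K)*tau)) by ring.
      nra. }
  simpl in HG. replace (tau*0) with 0 in HG by ring. rewrite exp_0 in HG.
  change (c t - w k1 km1 k2 eT (s t)) with (u t).
  change (c 0 - w k1 km1 k2 eT (s 0)) with (u 0).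
  change (A^2/(km1+k2)^2) with K. change (km1+k2) with tau.
  assert (EF : exp (tau*t) * exp (-(tau*t)) = 1) by (rewrite <- exp_plus; replace (tau*t + -(tau*t)) with 0 by ring; apply exp_0).
  pose proof (exp_pos (-(tau*t))).
  assert (HG2 : (u t ^ 2 - K) * exp (tau*t) * exp (-(tau*t)) <= (u 0 ^2 - K) * 1 * exp (-(tau*t)))
    by (apply Rmult_le_compat_r; lra).
  replace ((u t ^ 2 - K) * exp (tau*t) * exp (-(tau*t))) with ((u t ^2 - K) * (exp (tau*t) * exp (-(tau*t)))) in HG2 by ring.
  rewrite EF in HG2. nra.
Qed.

Theorem proposition4p5 (k0 k1 km1 k2 eT : R) (s c : R -> R) :
  0 < k0 -> 0 < k1 -> 0 < km1 -> 0 < k2 -> 0 < eT ->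
  (forall t, 0 <= t -> is_derive s t (fs k0 k1 km1 eT (s t) (c t))) ->
  (forall t, 0 <= t -> is_derive c t (fc k1 km1 k2 eT (s t) (c t))) ->
  W1 k0 k1 km1 k2 eT (s 0) (c 0) ->
  let L := fun t => Rabs (c t - w k1 km1 k2 eT (s t)) in
  (forall v : R,
     is_lub (fun y => exists t, 0 <= t /\ y = Rabs (fs k0 k1 km1 eT (s t) (c t))) v ->
     forall t, 0 <= t ->
       L t ^ 2 <= L 0 ^ 2 * exp (- (tau0 km1 k2 * t))
                  + (eps_c k1 km1 k2 eT * v) ^ 2 / tau0 km1 k2 ^ 2
                    * (1 - exp (- (tau0 km1 k2 * t)))) /\
  (forall t, 0 <= t ->
     L t ^ 2 <= L 0 ^ 2 * exp (- (tau0 km1 k2 * t))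
                + (eps_c k1 km1 k2 eT * k0) ^ 2 / (km1 + k2) ^ 2) /\
  (eps_c k1 km1 k2 eT * k0) ^ 2 / (km1 + k2) ^ 2 = eps_star k0 k1 km1 k2 eT ^ 2.
Proof.
  intros H0 H1 Hm H2 He Hs Hc HW L.
  destruct HW as [S0 [Hlo Hhi]].
  assert (HG : (k1*eT*s 0 - k0)/(k1*s 0+km1) <= c 0) by (eapply Rle_trans; [apply Rmax_r|exact Hlo]).
  assert (P0 : 0 <= fs k0 k1 km1 eT (s 0) (c 0)).
  { assert (Hd : 0 < k1*s 0+km1) by nra.
    assert (E : (k1*eT*s 0 - k0)/(k1*s 0+km1) * (k1*s 0+km1) = k1*eT*s 0 - k0) by (field; lra).
    assert ((k1*eT*s 0 - k0)/(k1*s 0+km1) * (k1*s 0+km1) <= c 0 * (k1*s 0+km1))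
      by (apply Rmult_le_compat_r; lra).
    unfold fs. nra. }
  assert (Q0 : 0 <= fc k1 km1 k2 eT (s 0) (c 0)).
  { unfold w in Hhi.
    assert (Hd : 0 < k1*s 0+km1+k2) by nra.
    assert (E : k1*eT*s 0/(k1*s 0+km1+k2) * (k1*s 0+km1+k2) = k1*eT*s 0) by (field; lra).
    assert (c 0 * (k1*s 0+km1+k2) <= k1*eT*s 0/(k1*s 0+km1+k2) * (k1*s 0+km1+k2))
      by (apply Rmult_le_compat_r; lra).
    unfold fc. nra. }
  pose proof (invariance k0 k1 km1 k2 eT s c H0 H1 Hm H2 He Hs Hc S0 P0 Q0) as Inv.
  assert (Spos : forall t, 0 <= t -> 0 <= s t) by (intros t Ht; apply (Inv t Ht)).
  unfold L. unfold tau0.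
  split; [|split].
  - intros v Hv t Ht. rewrite !pow2_abs.
    apply (main_bound k0 k1 km1 k2 eT s c); auto.
    intros x Hx. rewrite Rabs_mult.
    destruct (W_le k1 km1 k2 eT (s x) H1 Hm H2 He (Spos x Hx)) as [Wa Wb].
    rewrite (Rabs_right (k1 * eT * (km1 + k2) / (k1 * s x + km1 + k2) ^ 2)) by lra.
    assert (Hp : Rabs (fs k0 k1 km1 eT (s x) (c x)) <= v).
    { apply (proj1 Hv). exists x. split; auto. }
    unfold eps_c. apply Rmult_le_compat; auto. apply Rabs_pos.
  - intros t Ht. rewrite !pow2_abs.
    eapply Rle_trans.
    + apply (main_bound k0 k1 km1 k2 eT s c (eps_c k1 km1 k2 eT * k0)); auto.
      intros x Hx. rewrite Rabs_mult.
      destruct (W_le k1 km1 k2 eT (s x) H1 Hm H2 He (Spos x Hx)) as [Wa Wb].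
      rewrite (Rabs_right (k1 * eT * (km1 + k2) / (k1 * s x + km1 + k2) ^ 2)) by lra.
      destruct (Inv x Hx) as [Sx [Px Qx]].
      assert (Hp : Rabs (fs k0 k1 km1 eT (s x) (c x)) <= k0).
      { rewrite Rabs_right by lra. unfold fc in Qx. unfold fs.
        destruct (Rle_dec 0 (c x)).
        - assert (0 <= k2 * c x) by (apply Rmult_le_pos; lra). nra.
        - assert (c x * s x <= 0) by nra.
          assert (k1 * (c x * s x) <= 0) by nra.
          assert (0 <= k1*eT*s x) by (apply Rmult_le_pos; [apply Rmult_le_pos|]; lra).
          assert (km1 * c x <= 0) by nra.
          nra. }
      unfold eps_c. apply Rmult_le_compat; auto. apply Rabs_pos.
    + pose proof (exp_pos (-((km1+k2)*t))).
      assert (0 <= (eps_c k1 km1 k2 eT * k0) ^ 2 / (km1 + k2) ^ 2).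
      { apply Rmult_le_pos. apply pow2_ge_0. left; apply Rinv_0_lt_compat; nra. }
      assert ((eps_c k1 km1 k2 eT * k0) ^ 2 / (km1 + k2) ^ 2 * (1 - exp (- ((km1 + k2) * t)))
              <= (eps_c k1 km1 k2 eT * k0) ^ 2 / (km1 + k2) ^ 2)
        by (rewrite <- (Rmult_1_r ((eps_c k1 km1 k2 eT * k0) ^ 2 / (km1 + k2) ^ 2)) at 2;
            apply Rmult_le_compat_l; lra).
      lra.
  - unfold eps_c, eps_star. field. lra.
Qed.
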